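(* Let $s$ be a positive integer and $D^\infty=\{a=(a_{i,j})_{i,j\ge0,\ i+j>2s}:\ a_{i,j}\in\mathbb{C},\ |a_{i,j}|\le1\}$. For $a$ put $\tilde a(\xi,\eta)=\sum_{i+j>2s}a_{i,j}\xi^i\eta^j$, and let $b^*(\xi,\eta,a)$ be the formal power series in $\xi,\eta$ and the variables $a_{i,j}$, without constant term, determined by $$b^*(\xi,\eta,a)=\tilde a\big(e^{b^*(\xi,\eta,a)}\xi,\ e^{b^*(\xi,\eta,a)}\eta\big).$$ Define $\psi_a(\xi,\eta)=\big(e^{b^*(\xi,\eta,a)}\xi,\ e^{b^*(\xi,\eta,a)}\eta\big)$. Then there exists a constant $R_1\in(0,1)$, independent of $a\in D^\infty$, such that $\psi_a$ is given by power series converging (absolutely) for $(\xi,\eta,a)\in\Delta_{R_1}\times D^\infty$, and for each $a\in D^\infty$, $\psi_a$ maps $\Delta_{R_1}$ into $\Delta_{1/3}$.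
   Context: $\Delta_r=\{(\xi,\eta)\in\mathbb{C}^2:|\xi|<r,|\eta|<r\}$. *)

(* Defs.v *)
From HB Require Import structures.
From mathcomp Require Import all_boot all_order all_algebra.
From mathcomp Require Import complex.
From mathcomp.multinomials Require Export monalg.
From mathcomp Require Export reals ereal esum sequences topology normedtype.
From mathcomp Require Import classical_sets finmap.

Set Implicit Arguments.
Unset Strict Implicit.
Unset Printing Implicit Defensive.

Import Order.TTheory GRing.Theory Num.Theory.
Import numFieldNormedType.Exports.
Local Open Scope ring_scope.

Section Defs.
Variable R : realType.

Local Notation C := R[i].

Definition amonom := {cmonom (nat * nat)%type}.

Definition apoly := {malg C[amonom]}.

Definition avar (i j : nat) : apoly := << ucm ((i, j) : (nat * nat)%type) >>.

(* Formal power series in xi, eta with coefficients in apoly, i.e. formal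
   power series in xi, eta and the a_{i,j}: f p q is the coefficient of
   xi^p eta^q. *)
Definition fps := nat -> nat -> apoly.

Definition fps_one : fps := fun p q => if (p == 0%N) && (q == 0%N) then 1 else 0.
Definition fps_xi : fps := fun p q => if (p == 1%N) && (q == 0%N) then 1 else 0.
Definition fps_eta : fps := fun p q => if (p == 0%N) && (q == 1%N) then 1 else 0.

Definition fps_mul (f g : fps) : fps := fun p q =>
  \sum_(k < p.+1) \sum_(l < q.+1) f k l * g (p - k)%N (q - l)%N.

Definition fps_pow (f : fps) (n : nat) : fps := iter n (fps_mul f) fps_one.

(* exp f = sum_n f^n / n!, for f WITHOUT constant term (f 0 0 = 0): then
   f^n has no monomial of (xi,eta)-degree < n, so the coefficient of
   xi^p eta^q only receives contributions from n <= p + q. *)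
Definition fps_exp (f : fps) : fps := fun p q =>
  \sum_(n < (p + q).+1) (n`!%:R)^-1 *: fps_pow f n p q.

Definition psi1 (b : fps) : fps := fps_mul (fps_exp b) fps_xi.
Definition psi2 (b : fps) : fps := fps_mul (fps_exp b) fps_eta.

(* Only terms with i <= p and j <= q contribute to the coefficient of
   xi^p eta^q, since (e^b xi)^i (e^b eta)^j is divisible by xi^i eta^j. *)
Definition is_bstar (s : nat) (b : fps) : Prop :=
  b 0%N 0%N = 0 /\
  forall p q, b p q =
    \sum_(i < p.+1) \sum_(j < q.+1)
      (if (2 * s < i + j)%N then
         avar i j * fps_mul (fps_pow (psi1 b) i) (fps_pow (psi2 b) j) p q
       else 0).

Definition meval (a : nat * nat -> C) (m : amonom) : C :=
  \prod_(k <- finsupp m) a k ^+ m k.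

Definition peval (a : nat * nat -> C) (P : apoly) : C :=
  \sum_(m <- msupp P) P@_m * meval a m.

Definition abs_conv (f : fps) (x y : C) (a : nat * nat -> C) : Prop :=
  (\esum_(t in [set: (nat * nat * amonom)%type])
     (complex.Re `|(f t.1.1 t.1.2)@_t.2 * meval a t.2 * x ^+ t.1.1 * y ^+ t.1.2|)%:E
   < +oo)%E.

Definition fps_psum (f : fps) (x y : C) (a : nat * nat -> C) (N : nat) : C :=
  \sum_(p < N) \sum_(q < N) peval a (f p q) * x ^+ p * y ^+ q.

Definition fps_val (f : fps) (x y : C) (a : nat * nat -> C) : C :=
  Complex (limn (fun N => complex.Re (fps_psum f x y a N)))
          (limn (fun N => complex.Im (fps_psum f x y a N))).

Definition in_bidisc (r : R) (x y : C) : Prop :=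
  `|x| < r%:C%C /\ `|y| < r%:C%C.

Definition in_Dinf (s : nat) (a : nat * nat -> C) : Prop :=
  forall i j, (2 * s < i + j)%N -> `|a (i, j)| <= 1.

End Defs.

(* Main.v *)
Require Import Defs.
From HB Require Import structures.
From mathcomp Require Import all_boot all_order all_algebra.
From mathcomp Require Import complex.
From mathcomp Require Import finmap.
From mathcomp.multinomials Require Import monalg.
From mathcomp Require Import classical_sets boolp functions reals ereal esum sequences topology normedtype fsbigop cardinality.
From mathcomp Require Import zify ring lra.
Import Order.TTheory GRing.Theory Num.Theory.
Import numFieldNormedType.Exports.
Local Open Scope ring_scope.
Set Warnings "-notation-overridden -ambiguous-paths -notation-incompatible-prefix".

Section Exist.
Variable R : realType.
Variable s : nat.

Definition Phi (b : fps R) : fps R := fun p q =>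
    \sum_(i < p.+1) \sum_(j < q.+1)
      (if (2 * s < i + j)%N then
         avar R i j * fps_mul (fps_pow (psi1 b) i) (fps_pow (psi2 b) j) p q
       else 0).

Definition agree (d : nat) (f g : fps R) := forall p q, (p + q < d)%N -> f p q = g p q.

Lemma agree_mul d f f' g g' : agree d f f' -> agree d g g' ->
  agree d (fps_mul f g) (fps_mul f' g').
Proof.
move=> hf hg p q hpq; rewrite /fps_mul; apply: eq_bigr => k _; apply: eq_bigr => l _.
have := ltn_ord k; have := ltn_ord l => hl hk.
rewrite hf ?hg //; lia.
Qed.

Lemma agree_pow d f f' n : agree d f f' -> agree d (fps_pow f n) (fps_pow f' n).
Proof.
move=> hf; elim: n => [|n IH] /=; first by [].
exact: agree_mul.
Qed.

Lemma agree_exp d f f' : agree d f f' -> agree d (fps_exp f) (fps_exp f').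
Proof.
move=> hf p q hpq; rewrite /fps_exp; apply: eq_bigr => n _.
by rewrite (@agree_pow d f f' n hf p q hpq).
Qed.

Lemma sum_ind1 (T : nmodType) n (F : 'I_n -> T) (c : 'I_n) :
  (forall k : 'I_n, (k : nat) != c -> F k = 0) -> \sum_(k < n) F k = F c.
Proof.
move=> h; rewrite (bigD1 c) //= big1 ?addr0 //.
Qed.

Lemma mul_xiE (f : fps R) p q :
  fps_mul f (fps_xi R) p q = if p is p'.+1 then f p' q else 0.
Proof.
rewrite /fps_mul.
transitivity (\sum_(k < p.+1) f k q * fps_xi R (p - k)%N 0).
  apply: eq_bigr => k _; rewrite (@sum_ind1 _ q.+1 _ ord_max) /= ?subnn //.
  move=> l /= hlq; rewrite /fps_xi.
  have := ltn_ord l => hl.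
  have -> : (q - l == 0)%N = false by apply/negbTE; lia.
  by rewrite andbF mulr0.
case: p => [|p].
  rewrite big_ord1 /fps_xi.
  have -> : ((0 - @ord0 0)%N == 1%N) = false by [].
  by rewrite andFb mulr0.
rewrite (@sum_ind1 _ p.+2 _ (Ordinal (leqnSn p.+1))).
  change (f p q * fps_xi R (p.+1 - p)%N 0 = f p q).
  have -> : fps_xi R (p.+1 - p)%N 0 = 1 by rewrite subSnn.
  by rewrite mulr1.
move=> k hkp; rewrite /fps_xi.
have := ltn_ord k => hk.
have -> : (p.+1 - k == 1)%N = false by apply/negbTE; move: hkp => /=; lia.
by rewrite andFb mulr0.
Qed.

Lemma mul_etaE (f : fps R) p q :
  fps_mul f (fps_eta R) p q = if q is q'.+1 then f p q' else 0.
Proof.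
rewrite /fps_mul.
rewrite (@sum_ind1 _ p.+1 _ ord_max) //=; last first.
  move=> k /= hkp; apply: big1 => l _; rewrite /fps_eta.
  have := ltn_ord k => hk.
  have -> : (p - k == 0)%N = false by apply/negbTE; lia.
  by rewrite /= mulr0.
case: q => [|q].
  rewrite big_ord1 /fps_eta.
  have -> : ((0 - @ord0 0)%N == 1%N) = false by [].
  by rewrite andbF mulr0.
rewrite (@sum_ind1 _ q.+2 _ (Ordinal (leqnSn q.+1))).
  change (f p q * fps_eta R (p - p)%N (q.+1 - q)%N = f p q).
  have -> : fps_eta R (p - p)%N (q.+1 - q)%N = 1 by rewrite subSnn subnn.
  by rewrite mulr1.
move=> k hkp; rewrite /fps_eta.
have := ltn_ord k => hk.
have -> : (q.+1 - k == 1)%N = false by apply/negbTE; move: hkp => /=; lia.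
by rewrite andbF mulr0.
Qed.

Lemma psi1E (b : fps R) p q :
  psi1 b p q = if p is p'.+1 then fps_exp b p' q else 0.
Proof. by rewrite /psi1 mul_xiE. Qed.

Lemma psi2E (b : fps R) p q :
  psi2 b p q = if q is q'.+1 then fps_exp b p q' else 0.
Proof. by rewrite /psi2 mul_etaE. Qed.

Lemma agree_psi1 d b b' : agree d b b' -> agree d.+1 (psi1 b) (psi1 b').
Proof.
move=> h p q hpq; rewrite !psi1E; case: p hpq => [|p] hpq; first by [].
apply: (@agree_exp d b b' h); lia.
Qed.

Lemma agree_psi2 d b b' : agree d b b' -> agree d.+1 (psi2 b) (psi2 b').
Proof.
move=> h p q hpq; rewrite !psi2E; case: q hpq => [|q] hpq; first by [].
apply: (@agree_exp d b b' h); lia.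
Qed.

Lemma agree_Phi d b b' : agree d b b' -> agree d.+1 (Phi b) (Phi b').
Proof.
move=> h p q hpq; rewrite /Phi; apply: eq_bigr => i _; apply: eq_bigr => j _.
case: (2 * s < i + j)%N; last by [].
have e : fps_mul (fps_pow (psi1 b) i) (fps_pow (psi2 b) j) p q =
         fps_mul (fps_pow (psi1 b') i) (fps_pow (psi2 b') j) p q.
  apply: (@agree_mul d.+1); [apply: agree_pow; exact: agree_psi1|
     apply: agree_pow; exact: agree_psi2| exact: hpq].
exact: (congr1 (fun z => avar R i j * z) e).
Qed.

Definition bn (n : nat) : fps R := iter n Phi (fun _ _ => 0).

Lemma agree_bn n : agree n (bn n) (bn n.+1).
Proof.
elim: n => [|n IH]; first by move=> p q; rewrite ltn0.
exact: agree_Phi.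
Qed.

Lemma bn_stable p q k : bn ((p + q).+1 + k) p q = bn (p + q).+1 p q.
Proof.
elim: k => [|k IH]; first by rewrite addn0.
rewrite addnS -IH; symmetry; apply: agree_bn; lia.
Qed.

Definition bstar : fps R := fun p q => bn (p + q).+1 p q.

Lemma bstar_is : is_bstar s bstar.
Proof.
split.
  change (Phi (bn 0) 0 0 = 0); rewrite /Phi !big_ord1.
  have -> : (2 * s < @ord0 0 + @ord0 0)%N = false by [].
  by [].
move=> p q.
transitivity (Phi (bn (p + q)) p q); first by [].
transitivity (Phi bstar p q); last by [].
have : agree (p + q) (bn (p + q)) bstar.
  move=> p' q' h; rewrite /bstar.
  have -> : (p + q = (p' + q').+1 + (p + q - (p' + q').+1))%N by lia.
  by rewrite bn_stable.
move/agree_Phi => /(_ p q (ltnSn _)); exact.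
Qed.

End Exist.

Section Norms.
Variable R : realType.
Local Notation C := R[i].

Definition nrm (z : C) : R := complex.Re `|z|.

Lemma normE (z : C) : `|z| = ((nrm z)%:C)%C.
Proof. by rewrite /nrm normc_def. Qed.

Lemma nrm_ge0 (z : C) : 0 <= nrm z.
Proof. by rewrite /nrm normc_def /= sqrtr_ge0. Qed.

Lemma nrmD (z w : C) : nrm (z + w) <= nrm z + nrm w.
Proof. by have := ler_normD z w; rewrite !normE -rmorphD lecR. Qed.

Lemma nrmM (z w : C) : nrm (z * w) = nrm z * nrm w.
Proof. by have := normrM z w; rewrite !normE -rmorphM => /complexI. Qed.

Lemma nrmX (z : C) n : nrm (z ^+ n) = nrm z ^+ n.
Proof. by have := normrX n z; rewrite !normE -rmorphXn => /complexI. Qed.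

Lemma nrm1 : nrm 1 = 1.
Proof. by have := normr1 C; rewrite normE => -[]. Qed.

Lemma nrm0 : nrm 0 = 0.
Proof. by have := normr0 C; rewrite normE => -[]. Qed.

Lemma nrm_sum I (r : seq I) (P : pred I) (F : I -> C) :
  nrm (\sum_(i <- r | P i) F i) <= \sum_(i <- r | P i) nrm (F i).
Proof.
apply: (big_ind2 (fun x y => nrm x <= y)); first by rewrite nrm0.
  by move=> x1 x2 y1 y2 h1 h2; apply: le_trans (nrmD _ _) _; apply: lerD.
by [].
Qed.

Lemma nrm_le (z : C) (r : R) : `|z| <= (r%:C)%C -> nrm z <= r.
Proof. by rewrite normE lecR. Qed.

Lemma nrm_lt (z : C) (r : R) : `|z| < (r%:C)%C -> nrm z < r.
Proof. by rewrite normE ltcR. Qed.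

Lemma nrm_Re (z : C) : `|complex.Re z| <= nrm z.
Proof. by have := normc_ge_Re z; rewrite normE lecR. Qed.

Lemma nrm_Im (z : C) : `|complex.Im z| <= nrm z.
Proof.
rewrite /nrm normc_def /=.
rewrite -sqrtr_sqr; apply: ler_wsqrtr.
by rewrite addrC lerDl sqr_ge0.
Qed.

Variable a : nat * nat -> C.

Definition W (m : amonom) : R := nrm (meval a m).

Lemma W_ge0 m : 0 <= W m. Proof. exact: nrm_ge0. Qed.

Lemma meval_w (m : amonom) (d : {fset (nat * nat)}) : (finsupp m `<=` d)%fset ->
  meval a m = \prod_(k <- d) a k ^+ m k.
Proof.
move=> le; rewrite /meval (big_fset_incl _ le) //= => x _ hx.
by have := hx; rewrite -cmE_eq0 => /eqP ->; rewrite expr0.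
Qed.

Lemma mevalM (m1 m2 : amonom) : meval a (mmul m1 m2) = meval a m1 * meval a m2.
Proof.
rewrite (@meval_w (mmul m1 m2) (finsupp m1 `|` finsupp m2)%fset); last by rewrite mdomD.
rewrite (@meval_w m1 _ (fsubsetUl (finsupp m1) (finsupp m2))).
rewrite (@meval_w m2 _ (fsubsetUr (finsupp m1) (finsupp m2))) -big_split /=.
by apply: eq_bigr => k _; rewrite cmM exprD.
Qed.

Lemma meval1 : meval a (mone : amonom) = 1.
Proof. by rewrite /meval mdom1 big_seq_fset0. Qed.

Lemma mevalU k : meval a (ucm k) = a k.
Proof. by rewrite /meval mdomU big_seq_fset1 cmUU expr1. Qed.

Definition NN (P : apoly R) : R := \sum_(m <- msupp P) nrm (P@_m) * W m.

Lemma NN_w (P : apoly R) (d : {fset amonom}) : (msupp P `<=` d)%fset ->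
  NN P = \sum_(m <- d) nrm (P@_m) * W m.
Proof.
move=> le; rewrite /NN (big_fset_incl _ le) //= => x _ hx.
by rewrite mcoeff_outdom // nrm0 mul0r.
Qed.

Lemma NN_ge0 P : 0 <= NN P.
Proof. by apply: sumr_ge0 => m _; apply: mulr_ge0; [apply: nrm_ge0|apply: W_ge0]. Qed.

Lemma NN0 : NN 0 = 0.
Proof. by rewrite /NN msupp0 big_seq_fset0. Qed.

Lemma NND P Q : NN (P + Q) <= NN P + NN Q.
Proof.
rewrite (@NN_w (P + Q) _ (msuppD_le P Q)) (@NN_w P _ (fsubsetUl (msupp P) (msupp Q))).
rewrite (@NN_w Q _ (fsubsetUr (msupp P) (msupp Q))) -big_split /=.
apply: ler_sum => m _; rewrite mcoeffD -mulrDl; apply: ler_wpM2r; first exact: W_ge0.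
exact: nrmD.
Qed.

Lemma NN_sum I (r : seq I) (Pr : pred I) (F : I -> apoly R) :
  NN (\sum_(i <- r | Pr i) F i) <= \sum_(i <- r | Pr i) NN (F i).
Proof.
apply: (big_ind2 (fun x y => NN x <= y)); first by rewrite NN0.
  by move=> x1 x2 y1 y2 h1 h2; apply: le_trans (NND _ _) _; apply: lerD.
by [].
Qed.

Lemma NNU (c : C) k : NN << c *g k >> = nrm c * W k.
Proof. by rewrite (@NN_w _ _ msuppU_le) big_seq_fset1 mcoeffUU. Qed.

Lemma NNM P Q : NN (P * Q) <= NN P * NN Q.
Proof.
rewrite malgME; apply: le_trans (NN_sum _ _ _ _) _.
rewrite /NN big_distrlr /=; apply: ler_sum => k1 _.
apply: le_trans (NN_sum _ _ _ _) _; apply: ler_sum => k2 _.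
rewrite NNU nrmM /W mevalM nrmM.
by rewrite mulrACA.
Qed.

Lemma NNZ (c : C) P : NN (c *: P) <= nrm c * NN P.
Proof.
rewrite (@NN_w (c *: P) _ (msuppZ_le c P)) /NN big_distrr /=.
by apply: ler_sum => m _; rewrite mcoeffZ nrmM mulrA.
Qed.

Lemma NN1 : NN 1 = 1.
Proof. by rewrite -mpolyC1E NNU nrm1 mul1r /W meval1 nrm1. Qed.

Lemma NNavar s i j : in_Dinf s a -> (2 * s < i + j)%N -> NN (avar R i j) <= 1.
Proof.
move=> hD hij; rewrite /avar NNU nrm1 mul1r /W mevalU.
by apply: nrm_le; apply: hD.
Qed.

Lemma peval_le P : nrm (peval a P) <= NN P.
Proof.
rewrite /peval; apply: le_trans (nrm_sum _ _ _ _) _.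
by apply: ler_sum => m _; rewrite nrmM.
Qed.

End Norms.

Section Bounds.
Variable R : realType.
Local Notation C := R[i].
Variable a : nat * nat -> C.
Variable r : R.
Hypothesis r0 : 0 <= r.

Definition phi (f : fps R) p q := NN R a (f p q).

Lemma phi_ge0 f p q : 0 <= phi f p q. Proof. exact: NN_ge0. Qed.

Definition S (f : fps R) N M : R :=
  \sum_(0 <= p < N) \sum_(0 <= q < M) phi f p q * (r ^+ p * r ^+ q).

Lemma S_ge0 f N M : 0 <= S f N M.
Proof.
apply: sumr_ge0 => p _; apply: sumr_ge0 => q _; apply: mulr_ge0; first exact: phi_ge0.
by apply: mulr_ge0; apply: exprn_ge0.
Qed.

Lemma eq_ler (x y : R) : x = y -> x <= y. Proof. by move->. Qed.

Lemma sum_widen (F : nat -> R) n m : (n <= m)%N -> (forall i, 0 <= F i) ->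
  \sum_(0 <= i < n) F i <= \sum_(0 <= i < m) F i.
Proof.
move=> nm F0; rewrite (@big_cat_nat _ _ _ n 0 m) //=.
by rewrite lerDl; apply: sumr_ge0.
Qed.

Lemma tri_eq (H : nat -> nat -> R) N :
  \sum_(0 <= p < N) \sum_(0 <= k < p.+1) H k (p - k)%N =
  \sum_(0 <= k < N) \sum_(0 <= j < N - k) H k j.
Proof.
elim: N => [|N IH]; first by rewrite !big_geq.
rewrite big_nat_recr //= IH.
transitivity (\sum_(0 <= k < N.+1) (\sum_(0 <= j < N - k) H k j + H k (N - k)%N)).
  rewrite big_split /= [X in _ = X + _]big_nat_recr //= subnn.
  by rewrite [X in _ = _ + X + _]big_geq // addr0.
apply: eq_big_nat => k /andP [_ hk].
have -> : (N.+1 - k = (N - k).+1)%N by lia.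
by rewrite big_nat_recr.
Qed.

Lemma tri_le (H : nat -> nat -> R) N : (forall i j, 0 <= H i j) ->
  \sum_(0 <= p < N) \sum_(0 <= k < p.+1) H k (p - k)%N <=
  \sum_(0 <= k < N) \sum_(0 <= j < N) H k j.
Proof.
move=> H0; rewrite tri_eq; apply: ler_sum => k _; apply: sum_widen => //; lia.
Qed.

Lemma phi_mul f g p q : phi (fps_mul f g) p q <=
  \sum_(0 <= k < p.+1) \sum_(0 <= l < q.+1) phi f k l * phi g (p - k)%N (q - l)%N.
Proof.
rewrite /phi /fps_mul big_mkord; apply: le_trans (NN_sum _ _ _ _ _ _) _.
apply: ler_sum => k _; rewrite big_mkord; apply: le_trans (NN_sum _ _ _ _ _ _) _.
by apply: ler_sum => l _; apply: NNM.
Qed.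

Lemma Smul f g N M : S (fps_mul f g) N M <= S f N M * S g N M.
Proof.
pose A k l := phi f k l * (r ^+ k * r ^+ l).
pose B k l := phi g k l * (r ^+ k * r ^+ l).
have A0 k l : 0 <= A k l.
  by apply: mulr_ge0; [exact: phi_ge0| apply: mulr_ge0; apply: exprn_ge0].
have B0 k l : 0 <= B k l.
  by apply: mulr_ge0; [exact: phi_ge0| apply: mulr_ge0; apply: exprn_ge0].
apply: (@le_trans _ _ (\sum_(0 <= p < N) \sum_(0 <= k < p.+1)
    \sum_(0 <= q < M) \sum_(0 <= l < q.+1) A k l * B (p - k)%N (q - l)%N)).
  rewrite /S; apply: ler_sum => p _.
  apply: (@le_trans _ _ (\sum_(0 <= q < M) \sum_(0 <= k < p.+1)
       \sum_(0 <= l < q.+1) A k l * B (p - k)%N (q - l)%N)); last first.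
    by rewrite exchange_big.
  apply: ler_sum => q _.
  apply: le_trans (ler_wpM2r _ (phi_mul f g p q)) _.
    by apply: mulr_ge0; apply: exprn_ge0.
  rewrite mulr_suml; apply: ler_sum_nat => k /andP [_ hk].
  rewrite mulr_suml; apply: ler_sum_nat => l /andP [_ hl].
  rewrite /A /B.
  have -> : r ^+ p = r ^+ k * r ^+ (p - k)%N by rewrite -exprD subnKC //; lia.
  have -> : r ^+ q = r ^+ l * r ^+ (q - l)%N by rewrite -exprD subnKC //; lia.
  apply: eq_ler.
  set x1 := r ^+ k; set x2 := r ^+ (p - k)%N; set x3 := r ^+ l; set x4 := r ^+ (q - l)%N.
  set y1 := phi f k l; set y2 := phi g (p - k)%N (q - l)%N.
  ring.
apply: (@le_trans _ _ (\sum_(0 <= k < N) \sum_(0 <= k' < N)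
    \sum_(0 <= q < M) \sum_(0 <= l < q.+1) A k l * B k' (q - l)%N)).
  apply: (tri_le (fun k k' => \sum_(0 <= q < M) \sum_(0 <= l < q.+1) A k l * B k' (q - l)%N)).
  by move=> i j; apply: sumr_ge0 => q _; apply: sumr_ge0 => l _; apply: mulr_ge0.
apply: (@le_trans _ _ (\sum_(0 <= k < N) \sum_(0 <= k' < N)
    \sum_(0 <= l < M) \sum_(0 <= l' < M) A k l * B k' l')).
  apply: ler_sum => k _; apply: ler_sum => k' _.
  apply: (tri_le (fun l l' => A k l * B k' l')) => i j; exact: mulr_ge0.
rewrite /S big_distrlr /=; apply: eq_ler.
apply: eq_bigr => k _.
apply: eq_bigr => j _; rewrite big_distrlr /=.
by [].
Qed.


Lemma lerX (x y : R) n : 0 <= x -> x <= y -> x ^+ n <= y ^+ n.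
Proof.
move=> hx hxy; apply: lerXn2r; rewrite ?nnegrE //; exact: le_trans hxy.
Qed.

Lemma S0l f M : S f 0 M = 0.
Proof. by rewrite /S big_geq. Qed.

Lemma S0r f N : S f N 0 = 0.
Proof. by rewrite /S big1 // => p _; rewrite big_geq. Qed.

Lemma S_one N M : S (fps_one R) N M <= 1.
Proof.
case: N => [|N]; first by rewrite S0l ler01.
rewrite /S big_nat_recl //.
rewrite [X in _ + X]big1 ?addr0; last first.
  move=> p _; apply: big1 => q _; rewrite /phi.
  have -> : fps_one R p.+1 q = 0 by [].
  by rewrite NN0 mul0r.
case: M => [|M]; first by rewrite big_geq // ler01.
rewrite big_nat_recl // [X in _ + X]big1 ?addr0; last first.
  move=> q _; rewrite /phi.
  have -> : fps_one R 0 q.+1 = 0 by [].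
  by rewrite NN0 mul0r.
rewrite /phi.
have -> : fps_one R 0 0 = 1 by [].
by rewrite NN1 !expr0 !mul1r.
Qed.

Lemma Spow f n N M : S (fps_pow f n) N M <= S f N M ^+ n.
Proof.
elim: n => [|n IH]; first by rewrite expr0; exact: S_one.
change (S (fps_mul f (fps_pow f n)) N M <= S f N M ^+ n.+1).
apply: le_trans (Smul _ _ _ _) _; rewrite exprS.
by apply: ler_wpM2l => //; exact: S_ge0.
Qed.

Lemma nrm_invfact n : nrm R ((n`!%:R : C)^-1) <= 1.
Proof.
apply: nrm_le; rewrite normfV normr_nat.
have h : (1 : C) <= n`!%:R by rewrite ler1n fact_gt0.
by rewrite invf_le1 // (lt_le_trans ltr01 h).
Qed.

Lemma phi_exp f p q :
  phi (fps_exp f) p q <= \sum_(0 <= n < (p + q).+1) phi (fps_pow f n) p q.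
Proof.
rewrite /phi /fps_exp big_mkord; apply: le_trans (NN_sum _ _ _ _ _ _) _.
apply: ler_sum => n _; apply: le_trans (NNZ _ _ _ _) _.
rewrite -[X in _ <= X]mul1r; apply: ler_wpM2r; first exact: NN_ge0.
exact: nrm_invfact.
Qed.

Lemma Sexp f N M : S (fps_exp f) N M <= \sum_(0 <= n < N + M) S f N M ^+ n.
Proof.
apply: (@le_trans _ _ (\sum_(0 <= p < N) \sum_(0 <= q < M) \sum_(0 <= n < N + M)
     phi (fps_pow f n) p q * (r ^+ p * r ^+ q))).
  apply: ler_sum_nat => p /andP [_ hp]; apply: ler_sum_nat => q /andP [_ hq].
  rewrite -mulr_suml; apply: ler_wpM2r; first by apply: mulr_ge0; apply: exprn_ge0.
  apply: le_trans (phi_exp _ _ _) _; apply: sum_widen; last by move=> i; exact: phi_ge0.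
  lia.
under eq_bigr do rewrite exchange_big.
rewrite exchange_big; apply: ler_sum => n _; exact: Spow.
Qed.

Lemma Spsi1 b N M : S (psi1 b) N.+1 M = r * S (fps_exp b) N M.
Proof.
rewrite /S big_nat_recl // big1 ?add0r; last first.
  by move=> q _; rewrite /phi psi1E NN0 mul0r.
rewrite mulr_sumr; apply: eq_bigr => p _; rewrite mulr_sumr; apply: eq_bigr => q _.
rewrite /phi psi1E exprS.
set x := NN R a _; ring.
Qed.

Lemma Spsi2 b N M : S (psi2 b) N M.+1 = r * S (fps_exp b) N M.
Proof.
rewrite /S mulr_sumr; apply: eq_bigr => p _.
rewrite big_nat_recl // /phi psi2E NN0 mul0r add0r.
rewrite mulr_sumr; apply: eq_bigr => q _.
rewrite psi2E exprS.
set x := NN R a _; ring.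
Qed.

Lemma geo (x : R) K : 0 <= x -> x <= 1 / 2 -> \sum_(0 <= n < K) x ^+ n <= 2.
Proof.
move=> x0 x1; elim: K => [|K IH]; first by rewrite big_geq.
rewrite big_nat_recl // expr0.
under eq_bigr do rewrite exprS.
rewrite -mulr_sumr.
have h : x * \sum_(0 <= i < K) x ^+ i <= 1 / 2 * 2.
  apply: ler_pM => //; apply: sumr_ge0 => i _; exact: exprn_ge0.
apply: le_trans (lerD (lexx 1) h) _.
by rewrite -mulrA mulVf // mulr1; lra.
Qed.

Lemma geo1 (x : R) K : 0 <= x -> x <= 1 / 2 ->
  \sum_(0 <= n < K) (if (0 < n)%N then x ^+ n else 0) <= 2 * x.
Proof.
move=> x0 x1; case: K => [|K]; first by rewrite big_geq // mulr_ge0.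
rewrite big_nat_recl // add0r.
under eq_bigr do rewrite exprS.
rewrite -mulr_sumr mulrC; apply: ler_wpM2r => //; exact: geo.
Qed.

Lemma geo2 s (x : R) N M : 0 <= x -> x <= 1 / 16 ->
  \sum_(0 <= i < N) \sum_(0 <= j < M)
     (if (2 * s < i + j)%N then x ^+ i * x ^+ j else 0) <= 1 / 2.
Proof.
move=> x0 x1.
have xh : x <= 1 / 2 by lra.
have g0 K : 0 <= \sum_(0 <= n < K) x ^+ n.
  by apply: sumr_ge0 => n _; exact: exprn_ge0.
apply: (@le_trans _ _ (\sum_(0 <= i < N) \sum_(0 <= j < M)
   ((if (0 < i)%N then x ^+ i else 0) * x ^+ j + x ^+ i * (if (0 < j)%N then x ^+ j else 0)))).
  apply: ler_sum => i _; apply: ler_sum => j _.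
  case: ifPn => h.
    case: i h => [|i] h /=.
      have hj : (0 < j)%N by lia.
      by rewrite hj mul0r add0r.
    rewrite lerDl; case: ifP => _; last by rewrite mulr0.
    by apply: mulr_ge0; apply: exprn_ge0.
  apply: addr_ge0; apply: mulr_ge0; try (case: ifP => _); try exact: exprn_ge0; by [].
under eq_bigr do rewrite big_split /=.
rewrite big_split /= -!big_distrlr /=.
have h1 : (\sum_(0 <= i < N) (if (0 < i)%N then x ^+ i else 0)) *
   (\sum_(0 <= j < M) x ^+ j) <= 2 * x * 2.
  apply: ler_pM => //; last exact: geo; last exact: geo1.
  by apply: sumr_ge0 => i _; case: ifP => _ //; exact: exprn_ge0.
have h2 : (\sum_(0 <= i < N) x ^+ i) * (\sum_(0 <= j < M) (if (0 < j)%N then x ^+ j else 0))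
   <= 2 * (2 * x).
  apply: ler_pM => //; last exact: geo1; last exact: geo.
  by apply: sumr_ge0 => i _; case: ifP => _ //; exact: exprn_ge0.
apply: le_trans (lerD h1 h2) _; lra.
Qed.

End Bounds.

Section Main.
Variable R : realType.
Local Notation C := R[i].
Variable a : nat * nat -> C.
Variable r : R.
Hypothesis r0 : 0 <= r.
Hypothesis r1 : r <= 1 / 32.
Variable s : nat.
Variable b : fps R.
Hypothesis hb : is_bstar s b.
Hypothesis hD : in_Dinf s a.

Let r2 : 0 <= 2 * r. Proof. have := r0; lra. Qed.
Let r3 : 2 * r <= 1 / 16. Proof. have := r1; lra. Qed.

Local Notation phi := (phi R a).
Local Notation S := (S R a r).

Definition prodij i j := fps_mul (fps_pow (psi1 b) i) (fps_pow (psi2 b) j).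

Lemma phi_b p q N M : (p < N)%N -> (q < M)%N ->
  phi b p q <= \sum_(0 <= i < N) \sum_(0 <= j < M)
     (if (2 * s < i + j)%N then phi (prodij i j) p q else 0).
Proof.
move=> hp hq.
have T0 i j : 0 <= (if (2 * s < i + j)%N then phi (prodij i j) p q else 0).
  by case: ifP => _ //; exact: phi_ge0.
apply: (@le_trans _ _ (\sum_(0 <= i < p.+1) \sum_(0 <= j < q.+1)
     (if (2 * s < i + j)%N then phi (prodij i j) p q else 0))).
  rewrite /phi (proj2 hb p q) big_mkord; apply: le_trans (NN_sum _ _ _ _ _ _) _.
  apply: ler_sum => i _; rewrite big_mkord; apply: le_trans (NN_sum _ _ _ _ _ _) _.
  apply: ler_sum => j _; case: ifPn => hij; last by rewrite NN0.
  apply: le_trans (NNM _ _ _ _) _.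
  rewrite -[X in _ <= X]mul1r; apply: ler_wpM2r; first exact: NN_ge0.
  exact: (@NNavar R a s i j hD hij).
apply: (@le_trans _ _ (\sum_(0 <= i < N) \sum_(0 <= j < q.+1)
     (if (2 * s < i + j)%N then phi (prodij i j) p q else 0))).
  by apply: sum_widen => // i; apply: sumr_ge0 => j _; exact: T0.
by apply: ler_sum => i _; apply: sum_widen.
Qed.

Lemma swap4 (F : nat -> nat -> nat -> nat -> R) N M K L :
  \sum_(0 <= p < N) \sum_(0 <= q < M) \sum_(0 <= i < K) \sum_(0 <= j < L) F p q i j =
  \sum_(0 <= i < K) \sum_(0 <= j < L) \sum_(0 <= p < N) \sum_(0 <= q < M) F p q i j.
Proof.
under eq_bigr do rewrite exchange_big.
rewrite exchange_big.
under eq_bigr do (under eq_bigr do rewrite exchange_big).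
by under eq_bigr do rewrite exchange_big.
Qed.

Lemma Sb_le N M : S b N M <= \sum_(0 <= i < N) \sum_(0 <= j < M)
     (if (2 * s < i + j)%N then S (prodij i j) N M else 0).
Proof.
apply: (@le_trans _ _ (\sum_(0 <= p < N) \sum_(0 <= q < M) \sum_(0 <= i < N) \sum_(0 <= j < M)
   (if (2 * s < i + j)%N then phi (prodij i j) p q else 0) * (r ^+ p * r ^+ q))).
  apply: ler_sum_nat => p /andP [_ hp]; apply: ler_sum_nat => q /andP [_ hq].
  under [X in _ <= X]eq_bigr do rewrite -mulr_suml.
  rewrite -mulr_suml.
  apply: ler_wpM2r; first by apply: mulr_ge0; apply: exprn_ge0.
  exact: phi_b.
rewrite swap4; apply: ler_sum => i _; apply: ler_sum => j _.
case: ifP => _; first by [].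
by apply: eq_ler; apply: big1 => p _; apply: big1 => q _; rewrite mul0r.
Qed.

Lemma Sprod i j N M :
  S (prodij i j) N M <= S (psi1 b) N M ^+ i * S (psi2 b) N M ^+ j.
Proof.
apply: le_trans (@Smul R a r r0 _ _ _ _) _.
by apply: ler_pM; try exact: S_ge0; exact: Spow.
Qed.

Lemma Sb_half N M : S b N M <= 1 / 2.
Proof.
suff : forall n N M, (N + M <= n)%N -> S b N M <= 1 / 2 by move/(_ (N + M) N M (leqnn _)).
elim=> [|n IH] {}N {}M hNM.
  have -> : N = 0%N by lia.
  by rewrite S0l; lra.
case: N hNM => [|N] hNM; first by rewrite S0l; lra.
case: M hNM => [|M] hNM; first by rewrite S0r; lra.
have h1 : S b N M.+1 <= 1 / 2 by apply: IH; lia.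
have h2 : S b N.+1 M <= 1 / 2 by apply: IH; lia.
have p1 : S (psi1 b) N.+1 M.+1 <= 2 * r.
  rewrite Spsi1 mulrC; apply: ler_wpM2r => //.
  apply: le_trans (@Sexp R a r r0 _ _ _) _; apply: geo => //; exact: S_ge0.
have p2 : S (psi2 b) N.+1 M.+1 <= 2 * r.
  rewrite Spsi2 mulrC; apply: ler_wpM2r => //.
  apply: le_trans (@Sexp R a r r0 _ _ _) _; apply: geo => //; exact: S_ge0.
apply: le_trans (Sb_le _ _) _.
have G := @geo2 R r r0 s (2 * r) N.+1 M.+1 r2 r3.
apply: (le_trans _ G).
apply: ler_sum => i _; apply: ler_sum => j _; case: (2 * s < i + j)%N; last by [].
apply: (@le_trans _ _ (S (psi1 b) N.+1 M.+1 ^+ i * S (psi2 b) N.+1 M.+1 ^+ j)).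
  exact: Sprod.
apply: ler_pM; try (apply: exprn_ge0; exact: S_ge0); apply: lerX => //; exact: S_ge0.
Qed.

Lemma Spsi1_bound N M : S (psi1 b) N M <= 2 * r.
Proof.
case: N => [|N]; first by rewrite S0l; exact: r2.
rewrite Spsi1 mulrC; apply: ler_wpM2r => //.
apply: le_trans (@Sexp R a r r0 _ _ _) _; apply: geo; [exact: S_ge0|exact: Sb_half].
Qed.

Lemma Spsi2_bound N M : S (psi2 b) N M <= 2 * r.
Proof.
case: M => [|M]; first by rewrite S0r; exact: r2.
rewrite Spsi2 mulrC; apply: ler_wpM2r => //.
apply: le_trans (@Sexp R a r r0 _ _ _) _; apply: geo; [exact: S_ge0|exact: Sb_half].
Qed.

End Main.

Section Final.
Variable R : realType.
Local Notation C := R[i].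

Lemma Re_sum I (r : seq I) (P : pred I) (F : I -> C) :
  complex.Re (\sum_(i <- r | P i) F i) = \sum_(i <- r | P i) complex.Re (F i).
Proof.
apply: (big_rec2 (fun x y => complex.Re y = x)) => //.
by move=> i y1 y2 _ <-; case: (F i) => ? ?; case: y2.
Qed.

Lemma Im_sum I (r : seq I) (P : pred I) (F : I -> C) :
  complex.Im (\sum_(i <- r | P i) F i) = \sum_(i <- r | P i) complex.Im (F i).
Proof.
apply: (big_rec2 (fun x y => complex.Im y = x)) => //.
by move=> i y1 y2 _ <-; case: (F i) => ? ?; case: y2.
Qed.

Lemma psumE (f : fps R) x y a N : fps_psum f x y a N =
  \sum_(0 <= p < N) \sum_(0 <= q < N) peval a (f p q) * x ^+ p * y ^+ q.
Proof.
rewrite /fps_psum big_mkord; apply: eq_bigr => p _; by rewrite big_mkord.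
Qed.

Definition sq (d : nat -> nat -> R) N := \sum_(0 <= p < N) \sum_(0 <= q < N) d p q.

Lemma sq_cvg (d : nat -> nat -> R) K : (forall p q, 0 <= d p q) ->
  (forall N, sq d N <= K) -> cvgn (sq d).
Proof.
move=> d0 dK; apply: nondecreasing_is_cvgn.
  move=> n m nm; rewrite /sq.
  apply: (@le_trans _ _ (\sum_(0 <= p < n) \sum_(0 <= q < m) d p q)).
    by apply: ler_sum => p _; apply: sum_widen.
  apply: sum_widen => // p; apply: sumr_ge0 => q _; exact: d0.
by exists K => _ [N _ <-].
Qed.

Variable a : nat * nat -> C.
Variable r : R.
Hypothesis r0 : 0 <= r.
Variable f : fps R.
Variables x y : C.
Hypothesis hx : nrm R x <= r.
Hypothesis hy : nrm R y <= r.
Variable K : R.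
Hypothesis hK : forall N M, S R a r f N M <= K.

Let c p q := peval a (f p q) * x ^+ p * y ^+ q.
Let t p q := phi R a f p q * (r ^+ p * r ^+ q).

Lemma t_ge0 p q : 0 <= t p q.
Proof.
apply: mulr_ge0; first exact: phi_ge0.
by apply: mulr_ge0; apply: exprn_ge0.
Qed.

Lemma nrm_c p q : nrm R (c p q) <= t p q.
Proof.
rewrite /c /t !nrmM !nrmX mulrA.
apply: ler_pM.
- apply: mulr_ge0; [exact: nrm_ge0|exact: exprn_ge0 (nrm_ge0 _ _)].
- exact: exprn_ge0 (nrm_ge0 _ _).
- apply: ler_pM; [exact: nrm_ge0|exact: exprn_ge0 (nrm_ge0 _ _)|exact: peval_le|exact: lerX (nrm_ge0 _ _) hx].
- exact: lerX (nrm_ge0 _ _) hy.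
Qed.

Lemma sq_t N : sq t N = S R a r f N N.
Proof. by []. Qed.

Lemma val_re :
  cvgn (fun N => complex.Re (fps_psum f x y a N)) /\
  `|complex.Re (fps_val f x y a)| <= K.
Proof.
have eq N : complex.Re (fps_psum f x y a N) =
    sq (fun p q => complex.Re (c p q) + t p q) N - sq t N.
  rewrite psumE /sq Re_sum -sumrB; apply: eq_bigr => p _.
  rewrite Re_sum -sumrB; apply: eq_bigr => q _; rewrite addrK; by [].
have bnd N : `|complex.Re (fps_psum f x y a N)| <= K.
  rewrite psumE Re_sum; apply: le_trans (ler_norm_sum _ _ _) _.
  apply: le_trans _ (hK N N); apply: ler_sum => p _.
  rewrite Re_sum; apply: le_trans (ler_norm_sum _ _ _) _.
  apply: ler_sum => q _; apply: le_trans (nrm_Re _ _) _; exact: nrm_c.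
have cv : cvgn (fun N => complex.Re (fps_psum f x y a N)).
  rewrite (_ : (fun N => _) = sq (fun p q => complex.Re (c p q) + t p q) - sq t); last first.
    by apply: funext => N; rewrite eq.
  apply: is_cvgB.
    apply: (@sq_cvg _ (K + K)).
      move=> p q; rewrite -lerBlDr sub0r.
      have := le_trans (nrm_Re _ (c p q)) (nrm_c p q).
      by rewrite ler_norml => /andP [].
    move=> N; rewrite /sq; under eq_bigr do rewrite big_split; rewrite big_split /=.
    apply: lerD; last exact: hK.
    apply: le_trans _ (hK N N); apply: ler_sum => p _; apply: ler_sum => q _.
    apply: le_trans (ler_norm _) _; apply: le_trans (nrm_Re _ _) _; exact: nrm_c.
  apply: (@sq_cvg _ K); first exact: t_ge0.
  by move=> N; rewrite sq_t.
split=> //; rewrite /fps_val /= ler_norml; apply/andP; split.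
  apply: limr_ge => //; apply: nearW => N.
  by have := bnd N; rewrite ler_norml => /andP [].
apply: limr_le => //; apply: nearW => N.
by have := bnd N; rewrite ler_norml => /andP [].
Qed.

Lemma val_im :
  `|complex.Im (fps_val f x y a)| <= K.
Proof.
have eq N : complex.Im (fps_psum f x y a N) =
    sq (fun p q => complex.Im (c p q) + t p q) N - sq t N.
  rewrite psumE /sq Im_sum -sumrB; apply: eq_bigr => p _.
  rewrite Im_sum -sumrB; apply: eq_bigr => q _; rewrite addrK; by [].
have bnd N : `|complex.Im (fps_psum f x y a N)| <= K.
  rewrite psumE Im_sum; apply: le_trans (ler_norm_sum _ _ _) _.
  apply: le_trans _ (hK N N); apply: ler_sum => p _.
  rewrite Im_sum; apply: le_trans (ler_norm_sum _ _ _) _.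
  apply: ler_sum => q _; apply: le_trans (nrm_Im _ _) _; exact: nrm_c.
have cv : cvgn (fun N => complex.Im (fps_psum f x y a N)).
  rewrite (_ : (fun N => _) = sq (fun p q => complex.Im (c p q) + t p q) - sq t); last first.
    by apply: funext => N; rewrite eq.
  apply: is_cvgB.
    apply: (@sq_cvg _ (K + K)).
      move=> p q; rewrite -lerBlDr sub0r.
      have := le_trans (nrm_Im _ (c p q)) (nrm_c p q).
      by rewrite ler_norml => /andP [].
    move=> N; rewrite /sq; under eq_bigr do rewrite big_split; rewrite big_split /=.
    apply: lerD; last exact: hK.
    apply: le_trans _ (hK N N); apply: ler_sum => p _; apply: ler_sum => q _.
    apply: le_trans (ler_norm _) _; apply: le_trans (nrm_Im _ _) _; exact: nrm_c.
  apply: (@sq_cvg _ K); first exact: t_ge0.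
  by move=> N; rewrite sq_t.
rewrite /fps_val /= ler_norml; apply/andP; split.
  apply: limr_ge => //; apply: nearW => N.
  by have := bnd N; rewrite ler_norml => /andP [].
apply: limr_le => //; apply: nearW => N.
by have := bnd N; rewrite ler_norml => /andP [].
Qed.

End Final.

Section Abs.
Local Open Scope classical_set_scope.
Variable R : realType.
Local Notation C := R[i].

Lemma esum_sq_le (c : nat * nat -> R) K : (forall t, 0 <= c t) ->
  (forall N, \sum_(0 <= p < N) \sum_(0 <= q < N) c (p, q) <= K) ->
  (\esum_(t in [set: nat * nat]) (c t)%:E <= K%:E)%E.
Proof.
move=> c0 cK; rewrite /esum; apply: ge_ereal_sup => _ [F [finF _] <-].
move: finF => /finite_fsetP [X ->].
set N := (\max_(t <- X) (t.1 + t.2)).+1.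
set s := [seq (i, j) | i <- index_iota 0 N, j <- index_iota 0 N].
have sub : {subset [set` X] <= [set` s]}.
  move=> [i j]; rewrite !inE /= => hX.
  have hm : (i + j <= \max_(t <- X) (t.1 + t.2))%N.
    have := @leq_bigmax_seq _ (enum_fset X) xpredT (fun t : nat * nat => (t.1 + t.2)%N) (i, j) hX isT.
    by [].
  apply: allpairs_f; rewrite mem_index_iota /N; lia.
have us : uniq s.
  apply: allpairs_uniq; try exact: iota_uniq.
  by move=> [? ?] [? ?] _ _ [-> ->].
apply: le_trans (lee_fsum_nneg_subset (finite_fset X) (finite_seq s) sub _) _.
  by move=> t _; rewrite lee_fin.
rewrite -fsbig_seq // big_allpairs.
under eq_bigr do rewrite sumEFin.
by rewrite sumEFin lee_fin.
Qed.

Variable a : nat * nat -> C.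
Variable r : R.
Hypothesis r0 : 0 <= r.
Variable f : fps R.
Variables x y : C.
Hypothesis hx : nrm R x <= r.
Hypothesis hy : nrm R y <= r.
Variable K : R.
Hypothesis hK : forall N M, S R a r f N M <= K.

Lemma inner_esum p q :
  (\esum_(m in [set: amonom])
     (complex.Re `|(f p q)@_m * meval a m * x ^+ p * y ^+ q|)%:E =
   (phi R a f p q * (nrm R x ^+ p * nrm R y ^+ q))%:E)%E.
Proof.
set d := msupp (f p q).
transitivity (\esum_(m in [set` d])
     (complex.Re `|(f p q)@_m * meval a m * x ^+ p * y ^+ q|)%:E)%E.
  rewrite [RHS]esum_mkcond; apply: eq_esum => m _.
  case: ifPn => // hm.
  have hm' : m \notin d.
    apply: contra hm => hd; rewrite in_setE; exact: hd.
  rewrite mcoeff_outdom // !mul0r.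
  have := nrm0 R; rewrite /nrm => ->; by [].
rewrite esum_fset; last by move=> m _; rewrite lee_fin; exact: nrm_ge0.
  rewrite -fsbig_seq; last exact: fset_uniq.
  rewrite sumEFin; congr (_%:E).
  rewrite /phi /NN mulr_suml; apply: eq_bigr => m _.
  rewrite -/(nrm R _) !nrmM !nrmX /W; by rewrite -!mulrA.
exact: finite_fset.
Qed.

Lemma abs_conv_ok : abs_conv f x y a.
Proof.
rewrite /abs_conv.
have -> : [set: (nat * nat * amonom)%type] = [set: nat * nat] `*`` (fun _ => [set: amonom]).
  by apply/seteqP; split => t.
have E := @esum_esum R _ _ [set: nat * nat] (fun _ => [set: amonom])
  (fun pq m => (complex.Re `|(f pq.1 pq.2)@_m * meval a m * x ^+ pq.1 * y ^+ pq.2|)%:E)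
  (fun i j _ _ => nrm_ge0 _ _).
rewrite -[X in (X < _)%E]E.
under eq_esum do rewrite inner_esum.
apply: (@le_lt_trans _ _ K%:E); last exact: ltry.
apply: esum_sq_le.
  move=> [p q]; apply: mulr_ge0; first exact: phi_ge0.
  by apply: mulr_ge0; apply: exprn_ge0; exact: nrm_ge0.
move=> N; apply: le_trans (hK N N); apply: ler_sum => p _; apply: ler_sum => q _.
apply: ler_wpM2l; first exact: phi_ge0.
apply: ler_pM; try exact: exprn_ge0 (nrm_ge0 _ _); exact: lerX (nrm_ge0 _ _) _.
Qed.

End Abs.

Lemma val_small (R : realType) (a : nat * nat -> R[i]) (r : R) (r0 : 0 <= r) (f : fps R)
  (x y : R[i]) (hx : nrm R x <= r) (hy : nrm R y <= r)
  (hK : forall N M, S R a r f N M <= 1 / 16) :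
  `|fps_val f x y a| < ((1 / 3)%:C)%C.
Proof.
have hre := proj2 (@val_re R a r r0 f x y hx hy (1 / 16) hK).
have him := @val_im R a r r0 f x y hx hy (1 / 16) hK.
move: hre him; case: (fps_val f x y a) => u v /= hu hv.
rewrite normc_def /= ltcR.
move: hu hv; rewrite !ler_norml => /andP [hu1 hu2] /andP [hv1 hv2].
have h : u ^+ 2 + v ^+ 2 < (1 / 3) ^+ 2 by rewrite !expr2; nra.
have -> : (1 / 3 : R) = Num.sqrt ((1 / 3) ^+ 2).
  by rewrite sqrtr_sqr ger0_norm //; lra.
by rewrite ltr_sqrt // expr2; nra.
Qed.

Theorem lemma4p2 (R : realType) (s : nat) (hs : (0 < s)%N) :
  (exists b : fps R, is_bstar s b) /\
  exists R1 : R, 0 < R1 < 1 /\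
    forall b : fps R, is_bstar s b ->
    forall a : nat * nat -> R[i], in_Dinf s a ->
    forall x y : R[i], in_bidisc R1 x y ->
      abs_conv (psi1 b) x y a /\ abs_conv (psi2 b) x y a /\
      in_bidisc (1 / 3) (fps_val (psi1 b) x y a) (fps_val (psi2 b) x y a).
Proof.
split; first by exists (bstar R s); exact: bstar_is.
exists (1 / 32); split; first by apply/andP; split; lra.
move=> b hb a hD x y [hx hy].
have r0 : (0 : R) <= 1 / 32 by lra.
have r1 : (1 / 32 : R) <= 1 / 32 by lra.
have hx' : nrm R x <= 1 / 32 by apply: ltW; apply: nrm_lt.
have hy' : nrm R y <= 1 / 32 by apply: ltW; apply: nrm_lt.
have K1 N M : S R a (1 / 32) (psi1 b) N M <= 1 / 16.
  apply: le_trans (@Spsi1_bound R a (1 / 32) r0 r1 s b hb hD N M) _; lra.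
have K2 N M : S R a (1 / 32) (psi2 b) N M <= 1 / 16.
  apply: le_trans (@Spsi2_bound R a (1 / 32) r0 r1 s b hb hD N M) _; lra.
split; first exact: (@abs_conv_ok R a (1 / 32) (psi1 b) x y hx' hy' (1 / 16) K1).
split; first exact: (@abs_conv_ok R a (1 / 32) (psi2 b) x y hx' hy' (1 / 16) K2).
split; [exact: (@val_small R a _ r0 _ x y hx' hy' K1)|exact: (@val_small R a _ r0 _ x y hx' hy' K2)].
Qed.
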